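(* Let $\mathcal{A},\mathcal{B}$ be small categories, $L\dashv R:\mathcal{B}\to\mathcal{A}$ an adjunction with $R$ fully faithful and unit $\nu$, and $J$ a Grothendieck topology on $\mathcal{B}$. Let $f:\widehat{\mathcal{A}}\to\widehat{\mathcal{B}}$ be the induced local essential geometric morphism. Then the canonical transformation $\theta_X : f_*X\to f_!X$ is $J$-locally surjective for every $X$ in $\widehat{\mathcal{A}}$ if and only if, for every $C$ in $\mathcal{A}$, the map $\mathcal{A}(R-,\nu_C):\mathcal{A}(R-,C)\to\mathcal{A}(R-,R(LC))$ in $\widehat{\mathcal{B}}$ is $J$-locally surjective.
   Context: $\widehat{\mathcal{C}}$ denotes presheaves on $\mathcal{C}$. The geometric morphism $f$ has inverse image $f^*$ = precomposition with $L$, left adjoint $f_!$ = left Kan extension along $L$, and direct image $f_*$ = precomposition with $R$. For $X\in\widehat{\mathcal{A}}$ and $B\in\mathcal{B}$, elements of $(f_!X)B$ are classes $x\otimes b$ with $x\in XC$, $b:B\to LC$, subject to $(x\cdot u)\otimes v = x\otimes((Lu)v)$; the canonical $\theta_{X,B}:(f_*X)B = X(RB)\to(f_!X)B$ sends $x$ to $x\otimes\xi_B^{-1}$, where $\xi:LR\to\mathrm{id}$ is the (invertible) counit. A map $\lambda:F\to G$ in $\widehat{\mathcal{B}}$ is $J$-locally surjective if for each object $B$ and $y\in GB$ there is a $J$-covering sieve $S$ on $B$ such that for every $e:E\to B$ in $S$, $y\cdot e$ is in the image of $\lambda_E$. Concretely, $\mathcal{A}(R-,\nu_C)$ is locally surjective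 iff for every $D\in\mathcal{B}$ and $d:RD\to R(LC)$ there is $S\in JD$ such that for every $e:E\to D$ in $S$, $d\circ Re$ factors through $\nu_C:C\to R(LC)$. *)

(* Defs.v *)
From Stdlib Require Import Relation_Operators.

Set Implicit Arguments.
Unset Strict Implicit.

Record Cat := {
  Obj :> Type;
  Hom : Obj -> Obj -> Type;
  idm : forall x, Hom x x;
  comp : forall x y z, Hom y z -> Hom x y -> Hom x z;
  comp_id_l : forall x y (f : Hom x y), comp (idm y) f = f;
  comp_id_r : forall x y (f : Hom x y), comp f (idm x) = f;
  comp_assoc : forall x y z w (f : Hom x y) (g : Hom y z) (h : Hom z w),
      comp h (comp g f) = comp (comp h g) f
}.
Arguments Hom {c} _ _.
Arguments idm {c} _.
Arguments comp {c x y z} _ _.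
Notation "g \o' f" := (comp g f) (at level 40, left associativity).

Record Functor (C D : Cat) := {
  fobj :> C -> D;
  fmap : forall x y, Hom x y -> Hom (fobj x) (fobj y);
  fmap_id : forall x, fmap (idm x) = idm (fobj x);
  fmap_comp : forall x y z (f : Hom x y) (g : Hom y z),
      fmap (g \o' f) = fmap g \o' fmap f
}.
Arguments fmap {C D} f0 {x y} _.

Definition fully_faithful (C D : Cat) (F : Functor C D) : Prop :=
  forall x y : C,
    (forall f g : Hom x y, fmap F f = fmap F g -> f = g) /\
    (forall h : Hom (F x) (F y), exists f : Hom x y, fmap F f = h).

Record Adjunction (A B : Cat) (L : Functor A B) (R : Functor B A) := {
  unit_ : forall c : A, Hom c (R (L c));
  counit_ : forall b : B, Hom (L (R b)) b;
  unit_nat : forall c d (u : Hom d c),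
      fmap R (fmap L u) \o' unit_ d = unit_ c \o' u;
  counit_nat : forall b b' (g : Hom b' b),
      counit_ b \o' fmap L (fmap R g) = g \o' counit_ b';
  triangle_L : forall c : A, counit_ (L c) \o' fmap L (unit_ c) = idm (L c);
  triangle_R : forall b : B, fmap R (counit_ b) \o' unit_ (R b) = idm (R b)
}.

Definition sieve (C : Cat) (b : C) := forall e : C, Hom e b -> Prop.

Definition is_sieve (C : Cat) (b : C) (S : sieve b) : Prop :=
  forall e (f : Hom e b) d (g : Hom d e), S e f -> S d (f \o' g).

Definition pullback_sieve (C : Cat) (b e : C) (f : Hom e b) (S : sieve b)
  : sieve e := fun d g => S d (f \o' g).

Unset Implicit Arguments.
Record GrothTopology (C : Cat) := {
  covers :> forall b : C, sieve b -> Prop;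
  covers_sieve : forall b S, covers b S -> is_sieve S;
  covers_max : forall b, covers b (fun _ _ => True);
  covers_stable : forall b S, covers b S ->
      forall e (f : Hom e b), covers e (pullback_sieve f S);
  covers_trans : forall b S, covers b S -> forall S' : sieve b, is_sieve S' ->
      (forall e (f : Hom e b), S e f -> covers e (pullback_sieve f S')) ->
      covers b S'
}.

Set Implicit Arguments.

Record Psh (C : Cat) := {
  pobj :> C -> Type;
  pact : forall c d, pobj c -> Hom d c -> pobj d;
  pact_id : forall c (x : pobj c), pact x (idm c) = x;
  pact_comp : forall c d e (x : pobj c) (u : Hom d c) (v : Hom e d),
      pact (pact x u) v = pact x (u \o' v)
}.
Arguments pact {C} p {c d} _ _.

(* J-local surjectivity of a family lam : F -> G, where G is given by its
   carrier, restriction action, and the equality [eqG] on its elements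
   (Leibniz equality for genuine presheaves; the coend relation for f_!). *)
Definition locally_surjective (C : Cat) (J : GrothTopology C)
  (F G : C -> Type) (actG : forall d e, G d -> Hom e d -> G e)
  (eqG : forall e, G e -> G e -> Prop) (lam : forall d, F d -> G d) : Prop :=
  forall (d : C) (y : G d), exists S : sieve d, J d S /\
    forall e (f : Hom e d), S e f -> exists x : F e, eqG e (lam e x) (actG d e y f).

Section Essential.
Variables (A B : Cat) (L : Functor A B) (R : Functor B A).

Definition homR (c : A) : B -> Type := fun d => Hom (R d) c.
Definition homR_act (c : A) (d e : B) (x : homR c d) (g : Hom e d) : homR c e :=
  x \o' fmap R g.
Definition homR_post (c c' : A) (u : Hom c c') (d : B) (x : homR c d) : homR c' d :=
  u \o' x.

Variable X : Psh A.

Definition fstar (b : B) : Type := X (R b).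

(* Representatives x (x) b of elements of (f_! X) b, b : B -> L c. *)
Definition fshriek_rep (b : B) : Type := { c : A & (X c * Hom b (L c))%type }.

Definition fshriek_act (b e : B) (p : fshriek_rep b) (g : Hom e b) : fshriek_rep e :=
  existT _ (projT1 p) (fst (projT2 p), snd (projT2 p) \o' g).

Inductive fshriek_gen (b : B) : fshriek_rep b -> fshriek_rep b -> Prop :=
| fshriek_gen_intro : forall (c d : A) (x : X c) (u : Hom d c) (v : Hom b (L d)),
    fshriek_gen (existT _ d (pact X x u, v)) (existT _ c (x, fmap L u \o' v)).

(* Equality in the coend (f_! X) b: equivalence closure. *)
Definition fshriek_eq (b : B) : fshriek_rep b -> fshriek_rep b -> Prop :=
  clos_refl_sym_trans _ (@fshriek_gen b).

Definition theta (xiinv : forall b : B, Hom b (L (R b))) (b : B) (x : fstar b)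
  : fshriek_rep b := existT _ (R b) (x, xiinv b).

End Essential.

(* Main.v *)
Require Import Defs.
From Stdlib Require Import Relation_Operators.

Section Aux.
Variables (A B : Cat) (L : Functor A B) (R : Functor B A)
  (adj : Adjunction L R)
  (xiinv : forall b : B, Hom b (L (R b)))
  (xiinv_r : forall b : B, xiinv b \o' counit_ adj b = idm (L (R b))).

Lemma unitR (e : B) : unit_ adj (R e) = fmap R (xiinv e).
Proof.
  rewrite <- (comp_id_r (fmap R (xiinv e))).
  rewrite <- (triangle_R adj e).
  rewrite comp_assoc, <- fmap_comp, xiinv_r, fmap_id, comp_id_l.
  reflexivity.
Qed.

Lemma key2 (e : B) (c : A) (w : Hom (R e) c) :
  fmap R (fmap L w \o' xiinv e) = unit_ adj c \o' w.
Proof.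
  rewrite fmap_comp, <- unitR. apply (unit_nat adj).
Qed.

Definition yon (c : A) : Psh A.
Proof.
  refine (@Build_Psh A (fun d => Hom d c) (fun d d' x u => x \o' u) _ _).
  - intros. apply comp_id_r.
  - intros. symmetry. apply comp_assoc.
Defined.

Definition Phi (c : A) (b : B) (p : @fshriek_rep A B L (yon c) b) : Hom b (L c) :=
  fmap L (fst (projT2 p)) \o' snd (projT2 p).

Lemma Phi_inv (c : A) (b : B) (p q : @fshriek_rep A B L (yon c) b) :
  @fshriek_eq A B L (yon c) b p q -> Phi c b p = Phi c b q.
Proof.
  induction 1.
  - destruct H. unfold Phi; simpl.
    rewrite fmap_comp. symmetry. apply comp_assoc.
  - reflexivity.
  - symmetry; assumption.
  - congruence.
Qed.
End Aux.

Theorem lemma6p8 (A B : Cat) (L : Functor A B) (R : Functor B A)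
  (adj : Adjunction L R) (R_ff : fully_faithful R)
  (xiinv : forall b : B, Hom b (L (R b)))
  (xiinv_l : forall b : B, counit_ adj b \o' xiinv b = idm b)
  (xiinv_r : forall b : B, xiinv b \o' counit_ adj b = idm (L (R b)))
  (J : GrothTopology B) :
  (forall X : Psh A,
      @locally_surjective B J (@fstar A B R X) (@fshriek_rep A B L X)
        (@fshriek_act A B L X) (@fshriek_eq A B L X)
        (@theta A B L R X xiinv))
  <->
  (forall c : A,
      @locally_surjective B J (@homR A B R c) (@homR A B R (R (L c)))
        (@homR_act A B R (R (L c))) (fun _ => @eq _)
        (@homR_post A B R c (R (L c)) (unit_ adj c))).
Proof.
  split.
  - intros H c d y.
    destruct (proj2 (R_ff d (L c)) y) as [g Hg].
    destruct (H (@yon A c) d (existT _ c (idm c, g))) as [S [HS HS']].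
    exists S. split; [exact HS|].
    intros e f Hf. destruct (HS' e f Hf) as [x Hx].
    exists x. apply Phi_inv in Hx. unfold Phi in Hx; simpl in Hx.
    rewrite fmap_id, comp_id_l in Hx.
    unfold homR_post, homR_act. rewrite <- (@key2 A B L R adj xiinv xiinv_r), Hx, fmap_comp, Hg.
    reflexivity.
  - intros H X d p. destruct p as [c [x v]].
    destruct (H c d (fmap R v)) as [S [HS HS']].
    exists S. split; [exact HS|].
    intros e f Hf. destruct (HS' e f Hf) as [w Hw].
    exists (pact X x w).
    unfold theta, fshriek_act; simpl.
    assert (E : fmap L w \o' xiinv e = v \o' f).
    { apply (proj1 (R_ff e (L c))).
      rewrite (@key2 A B L R adj xiinv xiinv_r). unfold homR_post, homR_act in Hw.
      rewrite Hw, fmap_comp. reflexivity. }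
    rewrite <- E. apply rst_step. constructor.
Qed.
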